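(* Let $m\ge1$. For every $u$ in the even-parity sequence $\mathcal E^m$ and every $p$ in $\mathcal E^m$, the entry of $M_m$ in the row indexed by $u$ and the column indexed by $p$ is $H^{(u\oplus p)_1}\otimes\cdots\otimes H^{(u\oplus p)_m}$; and for every $u\in\mathcal E^m$ and every $p$ in the odd-parity sequence $\mathcal O^m$, the entry of $M'_m$ in the row indexed by $u$ and the column indexed by $p$ is $H^{(u\oplus p)_1}\otimes\cdots\otimes H^{(u\oplus p)_m}$. (Here $H^0=I$, $H^1=H$, and $(u\oplus p)_j$ is the $j$-th bit of the bitwise XOR of $u$ and $p$.) In other words, the matrix of local operations whose $(u,p)$ entry applies $H$ exactly at the positions where $u$ and the input $m$-tuple $p$ differ, with $u$ of even parity, coincides with $M_m$ when $p$ ranges over even-parity strings and with $M'_m$ when $p$ ranges over odd-parity strings.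
   Context: The matrices $M_i$, $M'_i$ (with entries formal tensor products of length $i$ of $I$ and $H$) are defined by $M_1=I$, $M'_1=H$, $M_{i+1}=\begin{pmatrix} I\otimes M_i & H\otimes M'_i\\ H\otimes M'_i & I\otimes M_i\end{pmatrix}$, $M'_{i+1}=\begin{pmatrix} I\otimes M'_i & H\otimes M_i\\ H\otimes M_i & I\otimes M'_i\end{pmatrix}$, where $A\otimes B$ tensors $A$ on the left with every entry of $B$. $H$ is the Hadamard gate and $I$ the identity. The rows of $M_m$ and $M'_m$ and the columns of $M_m$ are indexed by the $2^{m-1}$ even-parity $m$-bit strings in the order $\mathcal E^m$, and the columns of $M'_m$ by the $2^{m-1}$ odd-parity $m$-bit strings in the order $\mathcal O^m$, where these orders are defined recursively by $\mathcal E^1=(0)$, $\mathcal O^1=(1)$, $\mathcal E^{m+1}=(0e:e\in\mathcal E^m)$ followed by $(1o:o\in\mathcal O^m)$, and $\mathcal O^{m+1}=(0o:o\in\mathcal O^m)$ followed by $(1e:e\in\mathcal E^m)$ (e.g. $\mathcal E^3=(000,011,101,110)$). *)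

(* Defs.v *)
From mathcomp Require Import all_boot.
Set Implicit Arguments. Unset Strict Implicit. Unset Printing Implicit Defensive.

(* Bit strings: false = 0, true = 1.
   A formal tensor product of I's and H's of length i is a word : seq bool,
   false = I, true = H, head = leftmost tensor factor.
   A matrix of such words is a list of rows, each a list of entries. *)
Definition word := seq bool.
Definition mat := seq (seq word).

Definition tensl (b : bool) (A : mat) : mat := map (map (cons b)) A.

Definition block (A B C D : mat) : mat :=
  [seq r.1 ++ r.2 | r <- zip A B] ++ [seq r.1 ++ r.2 | r <- zip C D].

(* MMp n = (M_{n+1}, M'_{n+1}) *)
Fixpoint MMp (n : nat) : mat * mat :=
  match n with
  | 0 => ([:: [:: [:: false]]], [:: [:: [:: true]]])
  | n'.+1 =>
      let: (M, M') := MMp n' in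
      (block (tensl false M) (tensl true M') (tensl true M') (tensl false M),
       block (tensl false M') (tensl true M) (tensl true M) (tensl false M'))
  end.

Definition Mmat (m : nat) : mat := (MMp m.-1).1.
Definition Mpmat (m : nat) : mat := (MMp m.-1).2.

(* EO n = (E^{n+1}, O^{n+1}) *)
Fixpoint EO (n : nat) : seq word * seq word :=
  match n with
  | 0 => ([:: [:: false]], [:: [:: true]])
  | n'.+1 =>
      let: (Es, Os) := EO n' in
      ([seq false :: e | e <- Es] ++ [seq true :: o | o <- Os],
       [seq false :: o | o <- Os] ++ [seq true :: e | e <- Es])
  end.

Definition Eord (m : nat) : seq word := (EO m.-1).1.
Definition Oord (m : nat) : seq word := (EO m.-1).2.

Definition entry (A : mat) (i j : nat) : word := nth [::] (nth [::] A i) j.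

(* bitwise XOR; as a word it is H^{(u+p)_1} (x) ... (x) H^{(u+p)_m} *)
Definition xorw (u p : word) : word := [seq x.1 (+) x.2 | x <- zip u p].

(* Main.v *)
Require Import Defs.
From mathcomp Require Import all_boot.

Lemma MMpS n : MMp n.+1 =
  (block (tensl false (MMp n).1) (tensl true (MMp n).2) (tensl true (MMp n).2) (tensl false (MMp n).1),
   block (tensl false (MMp n).2) (tensl true (MMp n).1) (tensl true (MMp n).1) (tensl false (MMp n).2)).
Proof. by rewrite /=; case: (MMp n). Qed.

Lemma EOS n : EO n.+1 =
  ([seq false :: e | e <- (EO n).1] ++ [seq true :: o | o <- (EO n).2],
   [seq false :: o | o <- (EO n).2] ++ [seq true :: e | e <- (EO n).1]).
Proof. by rewrite /=; case: (EO n). Qed.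

Lemma block_row k (A B C D : mat) i : size A = k -> size B = k -> size C = k -> size D = k ->
  nth [::] (block A B C D) i =
  if i < k then nth [::] A i ++ nth [::] B i else nth [::] C (i - k) ++ nth [::] D (i - k).
Proof.
move=> sA sB sC sD; rewrite /block nth_cat size_map size_zip sA sB minnn.
case: ifP => Hi.
  by rewrite (nth_map ([::], [::])) ?size_zip ?sA ?sB ?minnn // nth_zip ?sA ?sB.
case: (ltnP (i - k) k) => Hj.
  by rewrite (nth_map ([::], [::])) ?size_zip ?sC ?sD ?minnn // nth_zip ?sC ?sD.
by rewrite !nth_default ?size_map ?size_zip ?sC ?sD ?minnn.
Qed.

Lemma tensl_row b A i : nth [::] (tensl b A) i = map (cons b) (nth [::] A i).
Proof.
rewrite /tensl; case: (ltnP i (size A)) => H; first by rewrite (nth_map [::]).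
by rewrite !nth_default ?size_map.
Qed.

Lemma nth_cons_map b (r : seq word) j : j < size r -> nth [::] (map (cons b) r) j = b :: nth [::] r j.
Proof. by move=> H; rewrite (nth_map [::]). Qed.

Lemma nthEO b (X Y : seq word) k i : size X = k -> i < k ->
  nth [::] ([seq b :: e | e <- X] ++ Y) i = b :: nth [::] X i.
Proof. by move=> sX Hi; rewrite nth_cat size_map sX Hi (nth_map [::]) ?sX. Qed.

Lemma nthEO2 b (X Y : seq word) k i : size X = k -> k <= i ->
  nth [::] (X ++ [seq b :: e | e <- Y]) i = if i - k < size Y then b :: nth [::] Y (i - k) else [::].
Proof.
move=> sX Hi; rewrite nth_cat sX ltnNge Hi /=.
case: ifP => H; first by rewrite (nth_map [::]).
by rewrite nth_default // size_map leqNgt H.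
Qed.

Definition Inv n :=
  let E := (EO n).1 in let O := (EO n).2 in let M := (MMp n).1 in let M' := (MMp n).2 in
  size E = 2^n /\ size O = 2^n /\ size M = 2^n /\ size M' = 2^n /\
  (forall i, i < 2^n -> size (nth [::] M i) = 2^n /\ size (nth [::] M' i) = 2^n) /\
  (forall i j, i < 2^n -> j < 2^n ->
     [/\ entry M i j = xorw (nth [::] E i) (nth [::] E j),
         entry M i j = xorw (nth [::] O i) (nth [::] O j),
         entry M' i j = xorw (nth [::] E i) (nth [::] O j) &
         entry M' i j = xorw (nth [::] O i) (nth [::] E j)]).

Lemma inv_all n : Inv n.
Proof.
elim: n => [|n [sE [sO [sM [sM' [srow IH]]]]]].
  split; first by []. do 4 split => //.
    by move=> i; rewrite expn0 ltnS leqn0 => /eqP ->.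
  by move=> i j; rewrite expn0 !ltnS !leqn0 => /eqP -> /eqP ->.
set E := (EO n).1 in sE IH *. set O := (EO n).2 in sO IH *.
set M := (MMp n).1 in sM srow IH *. set M' := (MMp n).2 in sM' srow IH *.
rewrite /Inv MMpS EOS -/E -/O -/M -/M' /=.
set k := 2 ^ n in sE sO sM sM' srow IH *.
have k2 : 2 ^ n.+1 = k + k by rewrite expnS mul2n addnn.
rewrite k2.
have stl b A : size (tensl b A) = size A by rewrite size_map.
have sblk A B C D : size A = k -> size B = k -> size C = k -> size D = k ->
   size (block A B C D) = k + k.
  by move=> a b c d; rewrite size_cat !size_map !size_zip a b c d !minnn.
split; first by rewrite size_cat !size_map sE sO.
split; first by rewrite size_cat !size_map sE sO.
split; first by apply: sblk; rewrite stl.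
split; first by apply: sblk; rewrite stl.
split.
  move=> i Hi; rewrite !(@block_row k) ?stl //.
  case: ifP => H; rewrite !size_cat !tensl_row !size_map.
    by have [-> ->] := srow i H.
  have H' : i - k < k by rewrite ltn_subLR // leqNgt H.
  by have [-> ->] := srow _ H'.
move=> i j Hi Hj.
rewrite /entry !(@block_row k) ?stl //.
have ent b A r c : r < k -> size (nth [::] A r) = k ->
   forall X, nth [::] (nth [::] (tensl b A) r ++ X) c =
     if c < k then b :: entry A r c else nth [::] X (c - k).
  move=> Hr sr X; rewrite nth_cat tensl_row size_map sr; case: ifP => // Hc.
  by rewrite nth_cons_map ?sr.
have ent2 b A r c : c < k -> size (nth [::] A r) = k -> nth [::] (nth [::] (tensl b A) r) c = b :: entry A r c.
  by move=> Hc sr; rewrite tensl_row nth_cons_map ?sr.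
have nE1 (X Y : seq word) b c : size X = k -> c < k -> nth [::] ([seq b :: e | e <- X] ++ Y) c = b :: nth [::] X c.
  by move=> sX Hc; exact: (@nthEO b X Y k c).
have nE2 (X Y : seq word) c : size X = k -> size Y = k -> c < k + k -> ~~ (c < k) ->
    nth [::] ([seq false :: e | e <- X] ++ [seq true :: e | e <- Y]) c = true :: nth [::] Y (c - k).
  move=> sX sY Hc Hck; have Hkc : k <= c by rewrite leqNgt.
  by rewrite (@nthEO2 _ _ _ k) ?size_map // sY ltn_subLR // Hc.
have xorw_cons a b u v : xorw (a :: u) (b :: v) = (a (+) b) :: xorw u v by [].
case: (ltnP i k) => Hik; case: (ltnP j k) => Hjk;
  rewrite ?Hik ?Hjk; try (have Hjk' : (j < k) = false by rewrite ltnNge Hjk).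
- have [r1 r2] := (srow i Hik).
  have [e1 e2 e3 e4] := IH i j Hik Hjk.
  rewrite !ent // Hjk !nE1 // !xorw_cons /=.
  by rewrite -e1 -e2 -e3 -e4.
- have [r1 r2] := (srow i Hik).
  have Hj' : j - k < k by rewrite ltn_subLR.
  have [e1 e2 e3 e4] := IH i (j - k) Hik Hj'.
  rewrite !ent // Hjk' !ent2 // !(nE1 _ _ _ i) //.
  rewrite nE2 // ?ltnNge ?Hjk //. rewrite nE2 // ?ltnNge ?Hjk //.
  by rewrite !xorw_cons /= -e1 -e2 -e3 -e4.
- have Hi' : i - k < k by rewrite ltn_subLR.
  have [r1 r2] := (srow _ Hi').
  have [e1 e2 e3 e4] := IH (i - k) j Hi' Hjk.
  rewrite !ent // Hjk !(nE1 _ _ _ j) //.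
  rewrite nE2 // ?ltnNge ?Hik //. rewrite nE2 // ?ltnNge ?Hik //.
  by rewrite !xorw_cons /= -e1 -e2 -e3 -e4.
- have Hi' : i - k < k by rewrite ltn_subLR.
  have Hj' : j - k < k by rewrite ltn_subLR.
  have [r1 r2] := (srow _ Hi').
  have [e1 e2 e3 e4] := IH (i - k) (j - k) Hi' Hj'.
  rewrite !ent // Hjk' !ent2 //.
  rewrite !nE2 // ?ltnNge ?Hik ?Hjk //.
  by rewrite !xorw_cons /= -e1 -e2 -e3 -e4.
Qed.

Theorem lemma1 (m : nat) : 1 <= m ->
  (forall u p, u \in Eord m -> p \in Eord m ->
     entry (Mmat m) (index u (Eord m)) (index p (Eord m)) = xorw u p) /\
  (forall u p, u \in Eord m -> p \in Oord m ->
     entry (Mpmat m) (index u (Eord m)) (index p (Oord m)) = xorw u p).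
Proof.
case: m => // n _; rewrite /Eord /Oord /Mmat /Mpmat /=.
have [sE [sO [_ [_ [_ IH]]]]] := inv_all n.
split=> u p Hu Hp.
- have Hi : index u (EO n).1 < 2 ^ n by rewrite -sE index_mem.
  have Hj : index p (EO n).1 < 2 ^ n by rewrite -sE index_mem.
  have [e1 _ _ _] := IH _ _ Hi Hj.
  by rewrite e1 !nth_index.
- have Hi : index u (EO n).1 < 2 ^ n by rewrite -sE index_mem.
  have Hj : index p (EO n).2 < 2 ^ n by rewrite -sO index_mem.
  have [_ _ e3 _] := IH _ _ Hi Hj.
  by rewrite e3 !nth_index.
Qed.
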